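(* For every $\delta>0$ there exist $C>0$ and a sequence $(\varepsilon_j)_{j\in\mathbb N}$ in $(0,1)$ with $\varepsilon_j\to0$, $\varepsilon_j/2\le\varepsilon_{j+1}\le\varepsilon_j$ for all $j$, and such that for all $j\in\mathbb N$ and all integers $n\ge1$, $$\phi_n^j:=\inf\{|\varepsilon_j-p/n|:\ p\in\mathbb Z\}\ \ge\ C\,\varepsilon_j\,e^{-n^2\pi^2\delta}.$$ *)

(* Defs.v *)
From Stdlib Require Import Reals.
Open Scope R_scope.

(* phi_n^j >= c  is expressed as: every element of {|eps - p/n| : p in Z} is >= c,
   i.e. the infimum is >= c. *)
Definition dist_lattice_ge (e : R) (n : nat) (c : R) : Prop :=
  forall p : Z, Rabs (e - IZR p / INR n) >= c.

(* Main.v *)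
Require Import Defs.
From Stdlib Require Import Reals Lra Lia Psatz ZArith Arith.
Open Scope R_scope.

Lemma no_sqrt2 : forall n m : nat, (m*m = 2*n*n)%nat -> n = 0%nat.
Proof.
  intro n. induction n as [n IH] using (well_founded_induction lt_wf).
  intros m H. destruct n as [|n']; [reflexivity|].
  destruct (Nat.Even_or_Odd m) as [[k Hk]|[k Hk]]; subst m.
  - assert (Hk2 : (S n' * S n' = 2*k*k)%nat) by nia.
    assert (Hlt : (k < S n')%nat) by nia.
    assert (k = 0%nat) by (apply (IH k Hlt (S n')); exact Hk2).
    subst k. nia.
  - exfalso. nia.
Qed.

Lemma s2_bounds : 1.4 < sqrt 2 < 1.5.
Proof.
  assert (H := sqrt_def 2 ltac:(lra)).
  assert (H0 := sqrt_pos 2). nra.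
Qed.

Lemma key (n : nat) (z : Z) : (1 <= n)%nat ->
  Rabs (sqrt 2 * INR n - IZR z) >= 1 / (4 * INR n).
Proof.
  intro Hn. assert (HN : 1 <= INR n) by (apply (le_INR 1); exact Hn).
  pose proof s2_bounds as Hs.
  assert (Hq : 1/(4*INR n) <= 1/4).
  { apply Rmult_le_compat_l; [lra|]. apply Rinv_le_contravar; lra. }
  destruct (Z_le_gt_dec z 0) as [Hz|Hz].
  - apply IZR_le in Hz. rewrite Rabs_right; nra.
  - destruct (Z_of_nat_complete z ltac:(lia)) as [m Hm]. subst z.
    rewrite <- INR_IZR_INZ.
    set (M := INR m). set (N := INR n).
    assert (Hs2 := sqrt_def 2 ltac:(lra)).
    assert (Hneq : (m*m <> 2*n*n)%nat).
    { intro E. apply no_sqrt2 in E. lia. }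
    assert (Hd : Rabs (2*N*N - M*M) >= 1).
    { destruct (Nat.lt_ge_cases (m*m) (2*n*n)) as [L|L].
      - assert (INR (m*m) + 1 <= INR (2*n*n)).
        { rewrite <- S_INR. apply le_INR. lia. }
        rewrite !mult_INR in H. simpl in H. fold M N in H.
        rewrite Rabs_right; lra.
      - assert (INR (2*n*n) + 1 <= INR (m*m)).
        { rewrite <- S_INR. apply le_INR. lia. }
        rewrite !mult_INR in H. simpl in H. fold M N in H.
        rewrite Rabs_left; lra. }
    assert (HM : 0 <= M) by apply pos_INR.
    destruct (Rle_dec M (2*N)) as [L|L].
    + assert (E : (sqrt 2 * N - M) * (sqrt 2 * N + M) = 2*N*N - M*M).
      { transitivity ((sqrt 2 * sqrt 2) * N * N - M * M); [ring|]. rewrite Hs2. ring. }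
      rewrite <- E, Rabs_mult in Hd.
      rewrite (Rabs_right (sqrt 2 * N + M)) in Hd by nra.
      apply Rle_ge. unfold Rdiv. rewrite Rmult_1_l.
      change (INR n) with N in HN.
      apply (Rmult_le_reg_r (4*N)); [lra|]. rewrite Rinv_l by lra.
      assert (0 <= Rabs (sqrt 2 * N - M)) by apply Rabs_pos. nra.
    + change (INR n) with N in HN, Hq. rewrite Rabs_left by nra. nra.
Qed.

Lemma pow2_gt (n : nat) : INR n < 2 ^ n.
Proof.
  induction n; [simpl; lra|]. rewrite S_INR. simpl.
  assert (1 <= 2 ^ n) by (apply pow_R1_Rle; lra). lra.
Qed.

Theorem lemma3 (delta : R) (hdelta : 0 < delta) :
  exists (C : R) (eps : nat -> R),
    0 < C /\
    (forall j, 0 < eps j < 1) /\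
    Un_cv eps 0 /\
    (forall j, eps j / 2 <= eps (S j) <= eps j) /\
    (forall (j n : nat), (1 <= n)%nat ->
       dist_lattice_ge (eps j) n
         (C * eps j * exp (- (INR n ^ 2 * PI ^ 2 * delta)))).
Proof.
  pose proof s2_bounds as Hs.
  assert (HPI : 0 < PI ^ 2) by (apply pow_lt; apply PI_RGT_0).
  set (a := PI ^ 2 * delta).
  assert (Ha : 0 < a) by (unfold a; nra).
  assert (HK : forall j, 2 <= 2 ^ S j).
  { intro j. simpl. assert (1 <= 2 ^ j) by (apply pow_R1_Rle; lra). lra. }
  exists (a / 8), (fun j => sqrt 2 / 2 ^ S j).
  split; [unfold Rdiv; lra|].
  split.
  { intro j. specialize (HK j). split.
    - apply Rdiv_lt_0_compat; lra.
    - apply (Rmult_lt_reg_r (2 ^ S j)); [lra|]. unfold Rdiv.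
      rewrite Rmult_assoc, Rinv_l by lra. lra. }
  split.
  { intros e He. destruct (archimed (sqrt 2 / e)) as [Ha1 _].
    destruct (Z_of_nat_complete (up (sqrt 2 / e))) as [N HN].
    { apply le_IZR. assert (0 < sqrt 2 / e) by (apply Rdiv_lt_0_compat; lra). simpl; lra. }
    exists N. intros n Hn. unfold Rdist. rewrite Rminus_0_r.
    assert (H2 : 0 < 2 ^ S n) by (apply pow_lt; lra).
    rewrite Rabs_right by (apply Rle_ge, Rlt_le, Rdiv_lt_0_compat; lra).
    rewrite HN, <- INR_IZR_INZ in Ha1.
    assert (INR N <= INR (S n)) by (apply le_INR; lia).
    pose proof (pow2_gt (S n)).
    assert (sqrt 2 / e < 2 ^ S n) by lra.
    apply (Rmult_lt_reg_r (2 ^ S n)); [lra|]. unfold Rdiv.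
    rewrite Rmult_assoc, Rinv_l by lra.
    apply (Rmult_lt_reg_r (/ e)); [apply Rinv_0_lt_compat; lra|].
    replace (e * 2 ^ S n * / e) with (2 ^ S n) by (field; lra). rewrite Rmult_1_r. exact H1. }
  split.
  { intro j. specialize (HK j).
    assert (Eq : sqrt 2 / 2 ^ S (S j) = (sqrt 2 / 2 ^ S j) / 2).
    { rewrite (pow_succ 2 (S j)) || idtac. simpl. field.
      assert (0 < 2 ^ j) by (apply pow_lt; lra). lra. }
    rewrite Eq. assert (0 < sqrt 2 / 2 ^ S j) by (apply Rdiv_lt_0_compat; lra).
    lra. }
  intros j n Hn p.
  assert (HN : 1 <= INR n) by (apply (le_INR 1); exact Hn).
  set (N := INR n) in *. set (K := 2 ^ S j).
  assert (HKp : 2 <= K) by apply HK.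
  assert (HzK : IZR p * K = IZR (p * 2 ^ Z.of_nat (S j))).
  { rewrite mult_IZR. f_equal. unfold K. rewrite pow_IZR. f_equal. }
  pose proof (key n (p * 2 ^ Z.of_nat (S j)) Hn) as Hk. fold N in Hk.
  rewrite <- HzK in Hk.
  assert (E : sqrt 2 / K - IZR p / N = (sqrt 2 * N - IZR p * K) / (N * K)).
  { field. lra. }
  rewrite E. unfold Rdiv at 1. rewrite Rabs_mult.
  rewrite (Rabs_right (/ (N*K))) by (apply Rle_ge, Rlt_le, Rinv_0_lt_compat; nra).
  replace (N ^ 2 * PI ^ 2 * delta) with (N*N*a) by (unfold a; ring).
  assert (Hex : 1 + N*N*a <= exp (N*N*a)) by apply exp_ineq1_le.
  assert (Hexp : exp (- (N*N*a)) * exp (N*N*a) = 1).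
  { rewrite <- exp_plus. replace (- (N*N*a) + N*N*a) with 0 by ring. apply exp_0. }
  assert (Hep : 0 < exp (- (N*N*a))) by apply exp_pos.
  assert (Hb : exp (- (N*N*a)) * (N*N*a) <= 1) by nra.
  apply Rle_ge.
  apply Rle_trans with (1 / (4*N) * / (N*K)).
  2:{ apply Rmult_le_compat_r; [apply Rlt_le, Rinv_0_lt_compat; nra|]. lra. }
  assert (R1 : 1 / (4 * N) * / (N * K) = / (4*N*N*K)) by (field; lra).
  rewrite R1.
  assert (R2 : a / 8 * (sqrt 2 / K) * exp (- (N * N * a))
               = (exp (- (N*N*a)) * (N*N*a)) * sqrt 2 / (8*N*N*K)) by (field; lra).
  rewrite R2.
  assert (R3 : / (4*N*N*K) = 2 / (8*N*N*K)) by (field; lra).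
  rewrite R3. unfold Rdiv. apply Rmult_le_compat_r.
  - apply Rlt_le, Rinv_0_lt_compat. nra.
  - assert (0 <= exp (- (N*N*a)) * (N*N*a)) by (apply Rmult_le_pos; nra). nra.
Qed.
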